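(* Let $k$ be a field, $S=k[x_1,\ldots,x_N]$, and let $F\subset S$ be a robust set of prime quadratic binomials. Then no monomial appears as a term in two different polynomials of $F$.
   Context: A prime quadratic binomial is a homogeneous polynomial of degree $2$ of the form $c_1m_1+c_2m_2$ with $m_1\neq m_2$ monomials and $c_1,c_2$ nonzero, which generates a prime ideal (equivalently, is irreducible). A set $F$ of polynomials is robust if it is a Gröbner basis of $(F)$ with respect to every monomial term order and its elements minimally generate $(F)$. *)

(* Defs.v *)
From HB Require Import structures.
From mathcomp Require Import all_boot all_order all_algebra.
From mathcomp Require Import mpoly.
Set Implicit Arguments. Unset Strict Implicit. Unset Printing Implicit Defensive.
Import Order.TTheory GRing.Theory.
Local Open Scope ring_scope.

Section Defs.
Variables (k : fieldType) (N : nat).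
Local Notation S := {mpoly k[N]}.
Local Notation mon := 'X_{1..N}.

Definition in_ideal (F : seq S) (p : S) : Prop :=
  exists c : 'I_(size F) -> S, p = \sum_(i < size F) c i * F`_i.

Definition prime_ideal_gen (F : seq S) : Prop :=
  ~ in_ideal F 1 /\
  forall a b : S, in_ideal F (a * b) -> in_ideal F a \/ in_ideal F b.

Definition quadratic_binomial (f : S) : Prop :=
  f \is 2.-homog /\
  exists (c1 c2 : k) (m1 m2 : mon),
    [/\ m1 != m2, c1 != 0, c2 != 0 & f = c1 *: 'X_[m1] + c2 *: 'X_[m2]].

Definition prime_quadratic_binomial (f : S) : Prop :=
  quadratic_binomial f /\ prime_ideal_gen [:: f].

Definition term_order (le : rel mon) : Prop :=
  [/\ reflexive le, antisymmetric le, transitive le & total le] /\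
  (forall m, le 0%MM m) /\
  (forall m1 m2 m3, le m1 m2 -> le (m1 + m3)%MM (m2 + m3)%MM).

Definition is_lead (le : rel mon) (p : S) (m : mon) : Prop :=
  m \in msupp p /\ forall m', m' \in msupp p -> le m' m.

Definition groebner_basis (le : rel mon) (F : seq S) : Prop :=
  forall p, in_ideal F p -> p != 0 ->
    exists2 f, f \in F &
      exists mf mp, [/\ f != 0, is_lead le f mf, is_lead le p mp & (mf <= mp)%MM].

Definition minimal_generators (F : seq S) : Prop :=
  forall f, f \in F -> ~ in_ideal [seq g <- F | g != f] f.

Definition robust (F : seq S) : Prop :=
  (forall le, term_order le -> groebner_basis le F) /\ minimal_generators F.

End Defs.

(* Main.v *)
Require Import Defs.
From HB Require Import structures.
From mathcomp Require Import all_boot all_order all_algebra.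
From mathcomp Require Import mpoly zify.
Set Implicit Arguments. Unset Strict Implicit. Unset Printing Implicit Defensive.
Import Order.TTheory GRing.Theory.
Local Open Scope ring_scope.

Section Aux.
Variables (k : fieldType) (N : nat).
Local Notation S := {mpoly k[N]}.
Local Notation mon := 'X_{1..N}.

Inductive spanP (L : seq S) : S -> Prop :=
| sp0 : spanP L 0
| spS x c p : x \in L -> spanP L p -> spanP L (c *: x + p).

Lemma span_add L p q : spanP L p -> spanP L q -> spanP L (p + q).
Proof.
elim=> [|x c p' xL _ IH] hq; first by rewrite add0r.
by rewrite -addrA; apply: spS => //; apply: IH.
Qed.

Lemma span_scale L a p : spanP L p -> spanP L (a *: p).
Proof.
elim=> [|x c p' xL _ IH]; first by rewrite scaler0; apply: sp0.
by rewrite scalerDr scalerA; apply: spS.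
Qed.

Lemma span_mem L x : x \in L -> spanP L x.
Proof. by move=> xL; have := spS 1 xL (sp0 L); rewrite scale1r addr0. Qed.

Lemma span_homog L p : (forall x, x \in L -> x \is 2.-homog) -> spanP L p -> p \is 2.-homog.
Proof.
move=> H; elim=> [|x c p' xL _ IH]; first exact: dhomog0.
by apply: dhomogD => //; apply: dhomogZ; apply: H.
Qed.

Lemma span_supp L p m : spanP L p -> m \in msupp p -> exists2 x, x \in L & m \in msupp x.
Proof.
elim=> [|x c p' xL _ IH]; first by rewrite msupp0.
move/msuppD_le; rewrite mem_cat => /orP[/msuppZ_le mx|/IH //].
by exists x.
Qed.

Lemma span_ideal L p : spanP L p -> in_ideal L p.
Proof.
elim=> [|x c p' xL _ [cc ->]].
  by exists (fun _ => 0); rewrite big1 // => i _; rewrite mul0r.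
have jL : (index x L < size L)%N by rewrite index_mem.
pose J := Ordinal jL.
exists (fun i => cc i + (if i == J then c%:MP else 0)).
rewrite [RHS](eq_bigr _ (fun i _ => mulrDl _ _ _)).
rewrite big_split /= addrC; congr (_ + _).
rewrite (bigD1 J) //= eqxx big1 ?addr0; last by move=> i /negbTE ->; rewrite mul0r.
by rewrite mul_mpolyC nth_index.
Qed.


Section Lead.
Variable le : rel mon.
Hypotheses (le_refl : reflexive le) (le_anti : antisymmetric le)
  (le_trans : transitive le) (le_tot : total le).

Lemma lead_uniq (p : S) m m' : is_lead le p m -> is_lead le p m' -> m = m'.
Proof.
move=> [mp Hm] [mp' Hm']; apply: le_anti.
by rewrite Hm' // Hm.
Qed.

Lemma seq_max (s : seq mon) : s != [::] -> exists2 m, m \in s & forall x, x \in s -> le x m.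
Proof.
elim: s => [//|a s IH] _.
case: (altP (s =P [::])) => [->|sn].
  by exists a; rewrite ?mem_head // => x; rewrite inE => /eqP ->.
have [b bs Hb] := IH sn.
case/orP: (le_tot a b) => hab.
  exists b; first by rewrite inE bs orbT.
  by move=> x; rewrite inE => /orP[/eqP->|/Hb].
exists a; first exact: mem_head.
move=> x; rewrite inE => /orP[/eqP->|/Hb hx] //.
exact: le_trans hx hab.
Qed.

Lemma exists_lead (p : S) : p != 0 -> exists m, is_lead le p m.
Proof.
by rewrite -msupp_eq0 => /seq_max [m ms Hm]; exists m.
Qed.

End Lead.

Lemma count_lt (T : eqType) (P Q : pred T) (s : seq T) x :
  (forall y, Q y -> P y) -> x \in s -> P x -> ~~ Q x -> (count Q s < count P s)%N.
Proof.
move=> QP; elim: s => [//|a s IH]; rewrite inE /= => /orP[/eqP<-|xs] Px nQx.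
  rewrite Px (negbTE nQx) /= add0n add1n ltnS.
  by elim: s {IH} => //= b s IH2; apply: leq_add => //; case: (Q b) (QP b) => // ->.
have h2 := IH xs Px nQx.
have h1 : (Q a <= P a)%N by case: (Q a) (QP a) => // ->.
lia.
Qed.

Lemma mdeg_lem_eq (a b : mon) : (a <= b)%MM -> mdeg a = mdeg b -> a = b.
Proof.
move=> ab; rewrite -(submK ab) mdegD => /eqP.
rewrite -{1}[mdeg a]add0n eqn_add2r eq_sym mdeg_eq0 => /eqP ->.
by rewrite add0m.
Qed.


Definition wt (w m : mon) : nat := (\sum_(i < N) w i * m i)%N.
Definition wle (w : mon) : rel mon :=
  fun m m' => (wt w m < wt w m')%N || ((wt w m == wt w m') && (m <= m')%O).

Lemma wtD w a b : wt w (a + b)%MM = (wt w a + wt w b)%N.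
Proof. by rewrite /wt -big_split; apply: eq_bigr => i _; rewrite mnmDE mulnDr. Qed.

Lemma wt0 w : wt w 0%MM = 0%N.
Proof. by rewrite /wt big1 // => i _; rewrite mnm0E muln0. Qed.

Lemma wle_term w : term_order (wle w).
Proof.
split; [split|split].
- by move=> m; rewrite /wle ltnn eqxx le_refl orbT.
- move=> a b; rewrite /wle => /andP[].
  case: (ltngtP (wt w a) (wt w b)) => //= _ h1 h2.
  by apply/le_anti; rewrite h1 h2.
- move=> b a c; rewrite /wle.
  case: (ltngtP (wt w a) (wt w b)) => //= hab.
    case: (ltngtP (wt w b) (wt w c)) => //= hbc _ _.
      by rewrite (ltn_trans hab hbc).
    by rewrite -hbc hab.
  move=> h1; case: (ltngtP (wt w b) (wt w c)) => //= hbc.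
    by rewrite hab hbc.
  by move=> h2; rewrite hab hbc eqxx (le_trans h1 h2) orbT.
- move=> a b; rewrite /wle.
  case: (ltngtP (wt w a) (wt w b)) => //= _.
  exact: le_total.
- move=> m; rewrite /wle wt0.
  case: (posnP (wt w m)) => [->|h]; last by [].
  by rewrite /= -[X in (_ <= X)%O]add0m lemc_addr.
- move=> a b c; rewrite /wle !wtD ltn_add2r eqn_add2r.
  by rewrite lemc_add2l.
Qed.


Lemma coef_bin a b (m m2 x : mon) :
  (a *: 'X_[m] + b *: 'X_[m2] : S)@_x = a * (m == x)%:R + b * (m2 == x)%:R.
Proof. by rewrite mcoeffD !mcoeffZ !mcoeffX. Qed.

Lemma bin_supp a b (m m2 x : mon) :
  x \in msupp (a *: 'X_[m] + b *: 'X_[m2] : S) -> x = m \/ x = m2.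
Proof.
rewrite mcoeff_msupp coef_bin.
by case: (eqVneq m x) => [->|_]; [left|case: (eqVneq m2 x) => [->|_]; [right|rewrite !mulr0 addr0 eqxx]].
Qed.

Lemma bin_suppl a b (m m2 : mon) : m2 != m -> a != 0 ->
  m \in msupp (a *: 'X_[m] + b *: 'X_[m2] : S).
Proof.
by move=> hm ha; rewrite mcoeff_msupp coef_bin eqxx (negbTE hm) mulr0 addr0 mulr1.
Qed.

Lemma bin_suppr a b (m m2 : mon) : m2 != m -> b != 0 ->
  m2 \in msupp (a *: 'X_[m] + b *: 'X_[m2] : S).
Proof.
by move=> hm hb; rewrite mcoeff_msupp coef_bin eqxx (eq_sym m) (negbTE hm) mulr0 add0r mulr1.
Qed.

Lemma rep (f : S) m : quadratic_binomial f -> m \in msupp f ->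
  exists a b m2, [/\ m2 != m, a != 0, b != 0 & f = a *: 'X_[m] + b *: 'X_[m2]].
Proof.
move=> [_ [c1 [c2 [n1 [n2 [hn h1 h2 ->]]]]]] /bin_supp [] ->.
  by exists c1, c2, n2; split; rewrite // eq_sym.
by exists c2, c1, n1; split; rewrite // addrC.
Qed.

Lemma not_ideal_small (f p : S) : f \is 2.-homog -> f != 0 -> p != 0 ->
  (forall x, x \in msupp p -> (mdeg x < 2)%N) -> ~ in_ideal [:: f] p.
Proof.
move=> hf fn0 pn0 hp [c]; rewrite big_ord1 /= => ep.
have cn0 : c ord0 != 0 by apply: contraNneq pn0 => h; rewrite ep h mul0r.
have := msizeM cn0 fn0; rewrite -ep.
have : (msize p <= 2)%N.
  by rewrite msizeE; apply/bigmax_leqP_seq => x xs _; apply: hp.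
have : (3 <= msize f)%N.
  move: fn0; rewrite -msupp_eq0; case E: (msupp f) => [//|x s] _.
  have xs : x \in msupp f by rewrite E mem_head.
  by have := msize_mdeg_lt xs; rewrite (dhomog_mf hf xs).
have : (0 < msize (c ord0))%N by rewrite lt0n msize_poly_eq0.
by move=> h1 h2 h3 h4; rewrite h4 in h3; move: h1 h2 h3; case: (mmeasure _ (c ord0)) => // u; case: (mmeasure _ f) => // v; rewrite addSn /=; lia.
Qed.

Lemma bin_mdeg a b (m m2 : mon) : m2 != m -> a != 0 -> b != 0 ->
  (a *: 'X_[m] + b *: 'X_[m2] : S) \is 2.-homog -> mdeg m = 2%N /\ mdeg m2 = 2%N.
Proof.
move=> hm ha hb hf; split; apply: (dhomog_mf hf).
  exact: bin_suppl. exact: bin_suppr.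
Qed.

Lemma bin_coprime a b (m m2 : mon) : m2 != m -> a != 0 -> b != 0 ->
  prime_quadratic_binomial (a *: 'X_[m] + b *: 'X_[m2] : S) ->
  forall i, (m i * m2 i = 0)%N.
Proof.
move=> hm ha hb [[hf _] [_ hpr]] i.
have [d1 d2] := bin_mdeg hm ha hb hf.
apply/eqP; apply/negP => /negP; rewrite muln_eq0 negb_or -!lt0n => /andP[p1 p2].
pose e : mon := U_(i)%MM.
have le_e (x : mon) : (0 < x i)%N -> (e <= x)%MM.
  move=> hx; apply/mnm_lepP => j; rewrite mnm1E.
  by case: (eqVneq i j) => [<-|] //.
pose q : S := a *: 'X_[m - e] + b *: 'X_[m2 - e].
have fe : (a *: 'X_[m] + b *: 'X_[m2] : S) = 'X_[e] * q.
  rewrite mulrDr -!scalerAr -!mpolyXD !(addmC e) !submK //; exact: le_e.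
have dx (x : mon) : (0 < x i)%N -> mdeg x = (mdeg (x - e)%MM).+1.
  by move=> hx; rewrite -{1}(submK (le_e x hx)) mdegD mdeg1 addn1.
have fn0 : (a *: 'X_[m] + b *: 'X_[m2] : S) != 0.
  by rewrite -msupp_eq0; apply/eqP => E; have := bin_suppl b hm ha; rewrite E.
have : in_ideal [:: (a *: 'X_[m] + b *: 'X_[m2] : S)] ('X_[e] * q).
  by exists (fun _ => 1); rewrite big_ord1 /= mul1r fe.
case/hpr; apply: not_ideal_small => //.
- by rewrite -msupp_eq0 msuppX.
- by move=> x; rewrite msuppX inE => /eqP ->; rewrite mdeg1.
- have hne : (m2 - e)%MM != (m - e)%MM.
    apply: contra hm => /eqP h.
    by rewrite -(submK (le_e _ p2)) h submK //; exact: le_e.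
  by rewrite -msupp_eq0; apply/eqP => E; have := bin_suppl b hne ha; rewrite E.
- move=> x /bin_supp [] ->.
    by move: (dx _ p1); rewrite d1 => -[<-].
  by move: (dx _ p2); rewrite d2 => -[<-].
Qed.


Lemma descent (le : rel mon) (F : seq S) (f : S) (m1 : mon) :
  term_order le -> groebner_basis le F ->
  (forall x, x \in F -> x \is 2.-homog) ->
  ~ in_ideal [seq g <- F | g != f] f ->
  is_lead le f m1 ->
  forall u m, spanP F u -> ~ spanP [seq g <- F | g != f] u -> is_lead le u m ->
  le m m1 -> m != m1 -> False.
Proof.
move=> [[lrefl lanti ltrans ltot] _] gb hom nf lf.
set G := [seq g <- F | g != f].
set Ms := flatten [seq msupp x | x <- F].
pose below m := fun x => le x m && (x != m).
suff H : forall n u m, (count (below m) Ms < n)%N -> spanP F u -> ~ spanP G u ->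
    is_lead le u m -> le m m1 -> m != m1 -> False.
  by move=> u m; apply: (H (count (below m) Ms).+1).
elim=> [|n IH] u m // hc su nsu lu lm1 nm1.
case: (eqVneq u 0) => [u0|un0]; first by apply: nsu; rewrite u0; apply: sp0.
have [h hF [mf [mp [hn0 lh lup dv]]]] := gb u (span_ideal su) un0.
have mpm : mp = m := lead_uniq lanti lup lu.
subst mp.
have mfm : mf = m.
  apply: mdeg_lem_eq dv _.
  by rewrite (dhomog_mf (hom h hF) lh.1) (dhomog_mf (span_homog hom su) lu.1).
subst mf.
have hf : h != f.
  apply/eqP => ehf; rewrite ehf in lh.
  by apply: (negP nm1); rewrite (lead_uniq lanti lh lf).
have hG : h \in G by rewrite mem_filter hf.
have hm0 : h@_m != 0 by rewrite -mcoeff_msupp; exact: lh.1.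
pose u' := u + (- (u@_m / h@_m)) *: h.
have su' : spanP F u' by apply: span_add su (span_scale _ (span_mem hF)).
have nsu' : ~ spanP G u'.
  move=> s; apply: nsu.
  have := span_add s (span_scale (u@_m / h@_m) (span_mem hG)).
  by rewrite /u' -addrA -scalerDl addNr scale0r addr0.
case: (eqVneq u' 0) => [u'0|u'n0]; first by apply: nsu'; rewrite u'0; apply: sp0.
have [m' lu'] : exists m', is_lead le u' m' by apply: (exists_lead lrefl ltrans ltot).
have m'm : le m' m.
  move: lu'.1 => /msuppD_le; rewrite mem_cat => /orP[/lu.2 //|/msuppZ_le].
  exact: lh.2.
have m'ne : m' != m.
  apply/eqP => e; have := lu'.1; rewrite e mcoeff_msupp mcoeffD mcoeffZ.
  by rewrite mulNr divfK // subrr eqxx.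
apply: (IH u' m') => //.
- have := hc; have : (count (below m') Ms < count (below m) Ms)%N.
    apply: (@count_lt _ _ _ _ m').
    + move=> y /andP[y1 y2]; rewrite /below (ltrans m' y m y1 m'm) /=.
      apply: contra y2 => /eqP ey; rewrite ey in y1 *.
      by apply/eqP; apply: lanti; rewrite y1 m'm.
    + have [x xF mx] := span_supp su' lu'.1.
      by apply/flattenP; exists (msupp x) => //; apply: map_f.
    + by rewrite /below m'm m'ne.
    + by rewrite /below eqxx andbF.
  lia.
- exact: (ltrans m).
- apply/eqP => e; rewrite e in m'm; apply: (negP nm1); apply/eqP.
  by apply: lanti; rewrite lm1 m'm.
Qed.

End Aux.

Unset Implicit Arguments.
Set Strict Implicit.

Theorem lemma2p4 (k : fieldType) (N : nat) (F : seq {mpoly k[N]}) :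
  (forall f, f \in F -> prime_quadratic_binomial f) ->
  robust F ->
  forall f g, f \in F -> g \in F -> f != g ->
  forall m : 'X_{1..N}, m \in msupp f -> m \notin msupp g.
Proof.
move=> hP [hgb hmin] f g fF gF fg m mf; apply/negP => mg.
have hom : forall x, x \in F -> x \is 2.-homog by move=> x /hP [[]].
have [a [b [m2 [hm2 ha hb ef]]]] := rep (hP f fF).1 mf.
have [c [d [m3 [hm3 hc hd eg]]]] := rep (hP g gF).1 mg.
have pf := hP f fF; rewrite ef in pf.
have pg := hP g gF; rewrite eg in pg.
have cop2 := bin_coprime hm2 ha hb pf.
have cop3 := bin_coprime hm3 hc hd pg.
have [dm _] := bin_mdeg hm2 ha hb pf.1.1.
pose le := wle m.
have hto := wle_term m.
have wpos : (0 < wt m m)%N.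
  rewrite lt0n; apply/negP => /eqP h0.
  have : mdeg m = 0%N.
    rewrite mdegE; apply/eqP; rewrite sum_nat_eq0; apply/forallP => i /=.
    move/eqP: h0; rewrite /wt sum_nat_eq0 => /forallP /(_ i) /=.
    by rewrite muln_eq0 orbb.
  by rewrite dm.
have w2 : wt m m2 = 0%N by rewrite /wt big1 // => i _; apply: cop2.
have w3 : wt m m3 = 0%N by rewrite /wt big1 // => i _; apply: cop3.
have l2 : le m2 m by rewrite /le /wle w2 wpos.
have l3 : le m3 m by rewrite /le /wle w3 wpos.
have [[lrefl lanti ltrans ltot] _] := hto.
have lf : is_lead le f m.
  split=> // x; rewrite ef => /bin_supp [] -> //; exact: lrefl.
have lg : is_lead le g m.
  split=> // x; rewrite eg => /bin_supp [] -> //; exact: lrefl.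
set G := [seq x <- F | x != f].
have gG : g \in G by rewrite mem_filter eq_sym fg.
pose v := c *: f + (- a) *: g.
have sv : spanP F v by apply: span_add; apply: span_scale; apply: span_mem.
have nsv : ~ spanP G v.
  move=> s; apply: (hmin f fF); apply: span_ideal.
  have := span_scale c^-1 (span_add s (span_scale a (span_mem gG))).
  by rewrite /v -addrA -scalerDl addNr scale0r addr0 scalerA mulVf // scale1r.
case: (eqVneq v 0) => [v0|vn0]; first by apply: nsv; rewrite v0; apply: sp0.
have [m0 lv] : exists m0, is_lead le v m0 by apply: (exists_lead lrefl ltrans ltot).
have lm0 : le m0 m.
  move: lv.1 => /msuppD_le; rewrite mem_cat => /orP[/msuppZ_le /lf.2 //|/msuppZ_le].
  exact: lg.2.
have nm0 : m0 != m.
  apply/eqP => e; have := lv.1; rewrite e mcoeff_msupp mcoeffD !mcoeffZ ef eg.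
  rewrite !coef_bin eqxx (negbTE hm2) (negbTE hm3) !mulr0 !addr0 !mulr1.
  by rewrite mulNr mulrC subrr eqxx.
exact: (descent hto (hgb le hto) hom (hmin f fF) lf sv nsv lv lm0 nm0).
Qed.
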